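(* Assume: every admissible noise $e=y_\delta-y$ (with $\|e\|\le\delta$) satisfies MC$_2$ with a common constant $C_2$; $x^\dagger\neq0$ satisfies $x^\dagger=(A^*A)^\mu\omega$, $\|\omega\|\le C_s$, with $0<\mu\le1$. Let $\alpha^*$ be a minimizer over $(0,\alpha_{\max})$ of the simple-L ratio functional $\psi_{SLR}$, and put $\tilde\mu=\min\{\mu,\tfrac12\}$. Then there exist $C>0$ and $\delta_0>0$, independent of $\delta$ and $e$, such that for all $0<\delta\le\delta_0$ $$\|x_{\alpha^*}^\delta-x^\dagger\|\le C\,\delta^{\frac{2\tilde\mu}{2\tilde\mu+1}\,2\tilde\mu};$$ and if in addition there is $D>0$ with $\sum_{\lambda_i\le\alpha}|\langle x^\dagger,u_i\rangle|^2\le D\sum_{\lambda_i\ge\alpha}\frac{\alpha}{\lambda_i}|\langle x^\dagger,u_i\rangle|^2$ for all $\alpha\in(0,\alpha_{\max})$, then for all $0<\delta\le\delta_0$ $$\|x_{\alpha^*}^\delta-x^\dagger\|\le C\,\delta^{\frac{2\tilde\mu}{2\tilde\mu+1}}.$$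
   Context: Let $X,Y$ be real Hilbert spaces and $A:X\to Y$ a compact linear operator with singular system $(\sigma_i,u_i,v_i)_i$, $\sigma_i>0$; put $\lambda_i=\sigma_i^2$. Let $x^\dagger\in N(A)^\perp$ be the minimum-norm solution, $y=Ax^\dagger$, $y_\delta=y+e$ with $\|e\|\le\delta$. Tikhonov regularization: $x_\alpha^\delta=(A^*A+\alpha I)^{-1}A^*y_\delta$, $\alpha\in(0,\alpha_{\max})$. Simple-L functional $\psi_{SL}(\alpha):=\big(\sum_i\frac{\alpha\lambda_i}{(\lambda_i+\alpha)^3}|\langle y_\delta,v_i\rangle|^2\big)^{1/2}=\big(-\tfrac12\alpha\tfrac{d}{d\alpha}\|x_\alpha^\delta\|^2\big)^{1/2}$; simple-L ratio functional $\psi_{SLR}(\alpha):=\psi_{SL}(\alpha)/\|x_\alpha^\delta\|$. Condition MC$_2$ with constant $C_2$: for all $0<\alpha\le\alpha_{\max}$, $\sum_{\lambda_i\ge\alpha}\frac{\alpha}{\lambda_i}|\langle e,v_i\rangle|^2\le C_2\sum_{\lambda_i\le\alpha}\frac{\lambda_i}{\alpha}|\langle e,v_i\rangle|^2$. *)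

(* Defs.v *)
(* classical reals.  The Hilbert-space setting is encoded in
   coordinates w.r.t. the singular system. *)
From Stdlib Require Import Reals Lra ClassicalEpsilon.
Open Scope R_scope.

Definition ex_series (f : nat -> R) : Prop := exists l, infinite_sum f l.

(* The sum of a series (meaningful only when it converges; all series used
   in the statement are provably convergent under its hypotheses). *)
Definition ssum (f : nat -> R) : R :=
  epsilon (inhabits 0) (fun l => infinite_sum f l).

Definition indic (b : bool) (x : R) : R := if b then x else 0.
Definition leRb (a b : R) : bool := if Rle_dec a b then true else false.

Definition pw (l mu : R) : R := if Rlt_dec 0 l then Rpower l mu else 0.

(* Data in coordinates: lam i = sigma_i^2, xd i = <x^dagger,u_i>,
   e i = <e, v_i>.  Then <y_delta, v_i> = sigma_i * xd i + e i. *)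
Definition ydc (lam xd e : nat -> R) (i : nat) : R :=
  sqrt (lam i) * xd i + e i.

(* coordinates <x_alpha^delta, u_i> of the Tikhonov solution *)
Definition xtik (lam xd e : nat -> R) (alpha : R) (i : nat) : R :=
  sqrt (lam i) / (lam i + alpha) * ydc lam xd e i.

Definition norm_seq (f : nat -> R) : R := sqrt (ssum (fun i => f i ^ 2)).

Definition psi_SL (lam xd e : nat -> R) (alpha : R) : R :=
  sqrt (ssum (fun i => alpha * lam i / (lam i + alpha) ^ 3 * ydc lam xd e i ^ 2)).

Definition psi_SLR (lam xd e : nat -> R) (alpha : R) : R :=
  psi_SL lam xd e alpha / norm_seq (xtik lam xd e alpha).

Definition MC2 (lam e : nat -> R) (alpha_max C2 : R) : Prop :=
  forall alpha, 0 < alpha <= alpha_max ->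
    ssum (fun i => indic (leRb alpha (lam i)) (alpha / lam i * e i ^ 2))
    <= C2 * ssum (fun i => indic (leRb (lam i) alpha) (lam i / alpha * e i ^ 2)).

Definition err (lam xd e : nat -> R) (alpha : R) : R :=
  norm_seq (fun i => xtik lam xd e alpha i - xd i).

(* Main.v *)
From Coquelicot Require Import Coquelicot.
From Stdlib Require Import Reals Lra Psatz ClassicalEpsilon Classical.
Require Import Defs.
Open Scope R_scope.
Set Bullet Behavior "Strict Subproofs".

Definition summ (f : nat -> R) := Defs.ex_series f.

Lemma summ_C f : summ f <-> Coquelicot.Series.ex_series f.
Proof.
  split.
  - intros [l Hl]. exists l. now apply is_series_Reals.
  - intros [l Hl]. exists l. now apply is_series_Reals.
Qed.

Lemma ssum_spec f : summ f -> infinite_sum f (ssum f).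
Proof. intros Hf. unfold ssum. exact (epsilon_spec (inhabits 0) (fun l => infinite_sum f l) Hf). Qed.

Lemma ssum_Series f : summ f -> ssum f = Series f.
Proof.
  intros Hf. symmetry. apply is_series_unique. apply is_series_Reals. now apply ssum_spec.
Qed.

Lemma summ_le f g : (forall n, 0 <= f n <= g n) -> summ g -> summ f.
Proof.
  intros H Hg. apply summ_C. apply summ_C in Hg.
  apply (@ex_series_le R_AbsRing R_CompleteNormedModule f g); auto.
  intros n. change (Rabs (f n) <= g n). rewrite Rabs_pos_eq; apply H.
Qed.

Lemma ssum_le f g : (forall n, 0 <= f n <= g n) -> summ g -> ssum f <= ssum g.
Proof.
  intros H Hg. assert (Hf := summ_le f g H Hg).
  rewrite !ssum_Series by auto. apply Series_le; auto. now apply summ_C.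
Qed.

Lemma summ_plus f g : summ f -> summ g -> summ (fun n => f n + g n).
Proof.
  intros Hf Hg. apply summ_C in Hf, Hg. apply summ_C.
  exact (@ex_series_plus R_AbsRing R_NormedModule f g Hf Hg).
Qed.

Lemma ssum_plus f g : summ f -> summ g -> ssum (fun n => f n + g n) = ssum f + ssum g.
Proof.
  intros Hf Hg. rewrite !ssum_Series by auto using summ_plus.
  apply Series_plus; now apply summ_C.
Qed.

Lemma summ_scal c f : summ f -> summ (fun n => c * f n).
Proof.
  intros Hf. apply summ_C in Hf. apply summ_C.
  exact (@ex_series_scal_l R_AbsRing R_NormedModule c f Hf).
Qed.

Lemma ssum_scal c f : summ f -> ssum (fun n => c * f n) = c * ssum f.
Proof.
  intros Hf. rewrite !ssum_Series by auto using summ_scal.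
  apply Series_scal_l.
Qed.

Lemma sum_ge_term f i : (forall n, 0 <= f n) -> f i <= sum_f_R0 f i.
Proof.
  intros H. destruct i. simpl; lra. simpl.
  assert (0 <= sum_f_R0 f i) by (apply cond_pos_sum; auto). lra.
Qed.

Lemma ssum_ge_term f i : (forall n, 0 <= f n) -> summ f -> f i <= ssum f.
Proof.
  intros H Hf. apply Rle_trans with (sum_f_R0 f i). now apply sum_ge_term.
  apply sum_incr; auto. exact (ssum_spec f Hf).
Qed.

Lemma ssum_nonneg f : (forall n, 0 <= f n) -> summ f -> 0 <= ssum f.
Proof.
  intros H Hf. apply Rle_trans with (f 0%nat). auto. now apply ssum_ge_term.
Qed.

Lemma ssum_ext f g : (forall n, f n = g n) -> ssum f = ssum g.
Proof. intros H. replace g with f. auto. apply FunctionalExtensionality.functional_extensionality. intro; apply H. Qed.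

Lemma summ_ext f g : (forall n, f n = g n) -> summ f -> summ g.
Proof. intros H Hf. replace g with f. auto. apply FunctionalExtensionality.functional_extensionality. intro; apply H. Qed.

Lemma ssum_lin f g h c d : (forall n, 0 <= f n <= c * g n + d * h n) -> summ g -> summ h ->
  summ f /\ ssum f <= c * ssum g + d * ssum h.
Proof.
  intros H Hg Hh.
  assert (Hs : summ (fun n => c * g n + d * h n)) by (apply summ_plus; apply summ_scal; auto).
  split. apply (summ_le _ _ H Hs).
  rewrite <- ssum_scal, <- (ssum_scal d) by auto. rewrite <- ssum_plus by (apply summ_scal; auto).
  now apply ssum_le.
Qed.

Lemma ssum_lin1 f g c : (forall n, 0 <= f n <= c * g n) -> summ g ->
  summ f /\ ssum f <= c * ssum g.
Proof.
  intros H Hg.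
  assert (Hs : summ (fun n => c * g n)) by (apply summ_scal; auto).
  split. apply (summ_le _ _ H Hs). rewrite <- ssum_scal by auto. now apply ssum_le.
Qed.

Ltac fs := field; repeat split; apply Rgt_not_eq; nra.

Lemma div_le p q r t : 0 < q -> 0 < t -> p * t <= r * q -> p / q <= r / t.
Proof.
  intros Hq Ht H. unfold Rdiv.
  apply Rmult_le_reg_r with (q*t). nra.
  replace (p * / q * (q * t)) with (p*t) by (field; lra).
  replace (r * / t * (q * t)) with (r*q) by (field; lra). lra.
Qed.

Lemma T_err l a x e : 0 <= l -> 0 < a ->
  (sqrt l / (l + a) * (sqrt l * x + e) - x) ^ 2 <=
  2 * ((a / (l + a)) ^ 2 * x ^ 2) + 2 * (l / (l + a) ^ 2 * e ^ 2).
Proof.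
  intros Hl Ha. assert (Hs := sqrt_sqrt l Hl). assert (H0 := sqrt_pos l).
  set (s := sqrt l) in *. rewrite <- Hs.
  replace (s / (s*s + a) * (s * x + e) - x) with (s*e/(s*s+a) + (-(a*x/(s*s+a)))) by fs.
  replace ((a / (s*s + a)) ^ 2 * x ^ 2) with ((-(a*x/(s*s+a)))^2) by fs.
  replace (s*s / (s*s + a) ^ 2 * e ^ 2) with ((s*e/(s*s+a))^2) by fs.
  generalize (s*e/(s*s+a)) (-(a*x/(s*s+a))). intros p q. pose proof (pow2_ge_0 (p-q)). nra.
Qed.

Lemma T_F l a x e : 0 <= l -> 0 < a ->
  (sqrt l / (l + a) * (sqrt l * x + e)) ^ 2 <= 2 * x ^ 2 + 2 * (l / (l + a) ^ 2 * e ^ 2).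
Proof.
  intros Hl Ha. assert (Hs := sqrt_sqrt l Hl). assert (H0 := sqrt_pos l).
  set (s := sqrt l) in *. rewrite <- Hs.
  replace (s / (s*s + a) * (s * x + e)) with (s*s/(s*s+a)*x + s*e/(s*s+a)) by fs.
  replace (s*s / (s*s + a) ^ 2 * e ^ 2) with ((s*e/(s*s+a))^2) by fs.
  assert (Hc: 0 <= s*s/(s*s+a) <= 1).
  { split. apply Rle_mult_inv_pos; nra. apply Rmult_le_reg_r with (s*s+a). nra.
    unfold Rdiv. rewrite Rmult_assoc, Rinv_l by nra. nra. }
  generalize (s*e/(s*s+a)). intros q.
  assert ((s * s / (s * s + a) * x)^2 <= x^2).
  { rewrite Rpow_mult_distr. assert ((s * s / (s * s + a))^2 <= 1) by nra. nra. }
  revert H. generalize (s * s / (s * s + a) * x). intros p Hp. pose proof (pow2_ge_0 (p-q)). nra.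
Qed.

Lemma T_Gid l a x e : 0 <= l -> 0 < a ->
  a * l / (l + a) ^ 3 * (sqrt l * x + e) ^ 2 = a / (l + a) * (sqrt l / (l + a) * (sqrt l * x + e)) ^ 2.
Proof.
  intros Hl Ha. assert (Hs := sqrt_sqrt l Hl).
  set (s := sqrt l) in *. rewrite <- Hs. fs.
Qed.

Lemma T_y1 l x e : 0 <= l -> (sqrt l * x + e) ^ 2 <= 2 * (l * x ^ 2) + 2 * e ^ 2.
Proof. intros Hl. assert (Hs := sqrt_sqrt l Hl). set (s := sqrt l) in *. rewrite <- Hs. pose proof (pow2_ge_0 (s*x-e)). nra. Qed.
Lemma T_y2 l x e : 0 <= l -> e ^ 2 <= 2 * (sqrt l * x + e) ^ 2 + 2 * (l * x ^ 2).
Proof. intros Hl. assert (Hs := sqrt_sqrt l Hl). set (s := sqrt l) in *. rewrite <- Hs. pose proof (pow2_ge_0 (e+2*s*x)). nra. Qed.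
Lemma T_y3 l x e : 0 <= l -> l * x ^ 2 <= 2 * (sqrt l * x + e) ^ 2 + 2 * e ^ 2.
Proof. intros Hl. assert (Hs := sqrt_sqrt l Hl). set (s := sqrt l) in *. rewrite <- Hs. pose proof (pow2_ge_0 (s*x+2*e)). nra. Qed.

Lemma frac_le1 l a : 0 <= l -> 0 < a -> 0 <= a / (l + a) <= 1.
Proof.
  intros Hl Ha. split. apply Rle_mult_inv_pos; lra.
  apply Rmult_le_reg_r with (l+a). lra. unfold Rdiv. rewrite Rmult_assoc, Rinv_l by lra. lra.
Qed.

Lemma T_GeNo l a e : 0 <= l -> 0 < a ->
  0 <= a * l / (l + a) ^ 3 * e ^ 2 <= l / (l + a) ^ 2 * e ^ 2.
Proof.
  intros Hl Ha. assert (He := pow2_ge_0 e).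
  replace (a * l / (l + a) ^ 3 * e ^ 2) with (a/(l+a) * (l / (l + a) ^ 2 * e ^ 2)) by fs.
  assert (0 <= l / (l + a) ^ 2 * e ^ 2).
  { apply Rmult_le_pos; auto. apply Rle_mult_inv_pos; auto. apply pow_lt; lra. }
  destruct (frac_le1 l a Hl Ha). split. nra. nra.
Qed.

Lemma T_No4 l a e : 0 <= l -> 0 < a ->
  0 <= l / (l + a) ^ 2 * e ^ 2 <= / (4 * a) * e ^ 2.
Proof.
  intros Hl Ha. assert (He := pow2_ge_0 e). split.
  { apply Rmult_le_pos; auto. apply Rle_mult_inv_pos; auto. apply pow_lt; lra. }
  apply Rmult_le_compat_r; auto. rewrite <- (Rmult_1_l (/ (4*a))). apply div_le.
  apply pow_lt; lra. lra. pose proof (pow2_ge_0 (l - a)). nra.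
Qed.

Lemma indic_nonneg b x : 0 <= x -> 0 <= indic b x.
Proof. intros; destruct b; simpl; lra. Qed.

Lemma T_NoMC l a e : 0 <= l -> 0 < a ->
  l / (l + a) ^ 2 * e ^ 2 <= / a * indic (leRb a l) (a / l * e ^ 2) + / a * indic (leRb l a) (l / a * e ^ 2).
Proof.
  intros Hl Ha. assert (He := pow2_ge_0 e). unfold leRb.
  destruct (Rle_dec a l) as [H1|H1]; destruct (Rle_dec l a) as [H2|H2]; unfold indic; cbv iota beta.
  - assert (l = a) by lra. subst l. replace (a / (a + a) ^ 2 * e ^ 2) with (/a * (/4 * e^2)) by fs.
    replace (a/a) with 1 by fs. assert (0 <= /a) by (left; apply Rinv_0_lt_compat; lra).
    rewrite <- Rmult_plus_distr_l. apply Rmult_le_compat_l; auto. lra.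
  - replace (/ a * (a / l * e ^ 2)) with (/ l * e^2) by fs. rewrite Rmult_0_r, Rplus_0_r.
    apply Rmult_le_compat_r; auto. rewrite <- (Rmult_1_l (/ l)). apply div_le; try lra.
    apply pow_lt; lra. nra.
  - try (exfalso; lra). replace (/ a * (l / a * e ^ 2)) with (l / (a*a) * e^2) by fs. rewrite Rmult_0_r, Rplus_0_l.
    apply Rmult_le_compat_r; auto. apply div_le. apply pow_lt; lra. nra. simpl. nra.
  - lra.
Qed.

Lemma T_GeLo l a e : 0 <= l -> 0 < a ->
  0 <= indic (leRb l a) (l / a * e ^ 2) <= 8 * a * (a * l / (l + a) ^ 3 * e ^ 2).
Proof.
  intros Hl Ha. assert (He := pow2_ge_0 e). unfold leRb.
  destruct (Rle_dec l a) as [H2|H2]; unfold indic; cbv iota beta.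
  - split. apply Rmult_le_pos; auto. apply Rle_mult_inv_pos; lra.
    replace (8 * a * (a * l / (l + a) ^ 3 * e ^ 2)) with ((8*a*a*l) / (l+a)^3 * e^2) by fs.
    apply Rmult_le_compat_r; auto. apply div_le; try lra. apply pow_lt; lra.
    assert (0 < (l+a)) by lra. assert ((l+a)^3 <= 8*a^3).
    { simpl. assert (l + a <= 2*a) by lra. assert ((l+a)*(l+a) <= (2*a)*(2*a)) by nra. nra. }
    simpl. simpl in H0. nra.
  - split. lra. assert (0 <= a * l / (l + a) ^ 3 * e ^ 2).
    { apply Rmult_le_pos; auto. apply Rle_mult_inv_pos. nra. apply pow_lt; lra. }
    nra.
Qed.

Lemma T_GxH l a x : 0 <= l -> 0 < a ->
  0 <= indic (leRb a l) (a / l * x ^ 2) <= 8 * (a * l / (l + a) ^ 3 * (l * x ^ 2)).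
Proof.
  intros Hl Ha. assert (He := pow2_ge_0 x). unfold leRb.
  assert (0 <= a * l / (l + a) ^ 3 * (l * x ^ 2)).
  { apply Rmult_le_pos. apply Rle_mult_inv_pos. nra. apply pow_lt; lra. nra. }
  destruct (Rle_dec a l) as [H2|H2]; unfold indic; cbv iota beta.
  - split. apply Rmult_le_pos; auto. apply Rle_mult_inv_pos; lra.
    replace (8 * (a * l / (l + a) ^ 3 * (l * x ^ 2))) with ((8*a*l*l) / (l+a)^3 * x^2) by fs.
    apply Rmult_le_compat_r; auto. apply div_le; try lra. apply pow_lt; lra.
    assert ((l+a)^3 <= 8*l^3).
    { simpl. assert (l + a <= 2*l) by lra. assert ((l+a)*(l+a) <= (2*l)*(2*l)) by nra. nra. }
    simpl. simpl in H0. nra.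
  - lra.
Qed.

Lemma T_ApLoH l a x : 0 <= l -> 0 < a ->
  0 <= (a / (l + a)) ^ 2 * x ^ 2 <= indic (leRb l a) (x ^ 2) + indic (leRb a l) (a / l * x ^ 2).
Proof.
  intros Hl Ha. assert (He := pow2_ge_0 x). unfold leRb. destruct (frac_le1 l a Hl Ha).
  split. apply Rmult_le_pos; auto. apply pow2_ge_0.
  assert ((a / (l + a)) ^ 2 <= 1) by nra.
  destruct (Rle_dec l a) as [H2|H2]; destruct (Rle_dec a l) as [H3|H3]; unfold indic; cbv iota beta.
  - assert (0 <= a/l*x^2). apply Rmult_le_pos; auto. apply Rle_mult_inv_pos; lra. nra.
  - nra.
  - rewrite Rplus_0_l. apply Rmult_le_compat_r; auto. 
    replace ((a / (l + a)) ^ 2) with ((a*a)/((l+a)^2)) by fs.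
    apply div_le; try lra. apply pow_lt; lra. simpl. nra.
  - lra.
Qed.

Lemma Rpow_pos x y : 0 < Rpower x y.
Proof. unfold Rpower. apply exp_pos. Qed.

Lemma Rpow_ratio a b p q : 0 < a <= b -> p <= q ->
  Rpower a q / Rpower b q * Rpower b p <= Rpower a p.
Proof.
  intros Hab Hpq.
  replace q with (p + (q - p)) by ring. rewrite !Rpower_plus.
  assert (Rpower a (q - p) <= Rpower b (q - p)) by (apply Rle_Rpower_l; lra).
  assert (H1 := Rpow_pos a p). assert (H2 := Rpow_pos b p).
  assert (H3 := Rpow_pos a (q-p)). assert (H4 := Rpow_pos b (q-p)).
  replace (Rpower a p * Rpower a (q - p) / (Rpower b p * Rpower b (q - p)) * Rpower b p)
    with (Rpower a p * (Rpower a (q - p) / Rpower b (q - p))) by fs.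
  rewrite <- (Rmult_1_r (Rpower a p)) at 2. apply Rmult_le_compat_l. lra.
  apply Rmult_le_reg_r with (Rpower b (q-p)). lra.
  unfold Rdiv. rewrite !Rmult_assoc, Rinv_l by lra. lra.
Qed.

Lemma pw_sq_bound l L mu m : 0 < l <= L -> m <= mu ->
  pw l mu ^ 2 <= Rpower L (2 * (mu - m)) * Rpower l (2 * m).
Proof.
  intros Hl Hm. unfold pw. destruct (Rlt_dec 0 l); [|lra].
  replace (Rpower l mu ^ 2) with (Rpower l (2*(mu-m)) * Rpower l (2*m)).
  2:{ rewrite <- Rpower_plus. simpl. rewrite Rmult_1_r, <- Rpower_plus. f_equal. ring. }
  apply Rmult_le_compat_r. left; apply Rpow_pos. apply Rle_Rpower_l; lra.
Qed.

Lemma R_Ap l L a mu m om : 0 <= l <= L -> 0 < a -> 0 < m <= 1/2 -> m <= mu ->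
  0 <= (a / (l + a)) ^ 2 * (pw l mu * om) ^ 2 <= Rpower L (2 * (mu - m)) * Rpower a (2 * m) * om ^ 2.
Proof.
  intros Hl Ha Hm Hmu. split. apply Rmult_le_pos; apply pow2_ge_0.
  rewrite Rpow_mult_distr, <- Rmult_assoc. apply Rmult_le_compat_r. apply pow2_ge_0.
  assert (HK0 := Rpow_pos L (2 * (mu - m))).
  assert (HK1 := Rpow_pos a (2 * m)).
  destruct (Rlt_dec 0 l) as [Hp|Hp].
  2:{ assert (Hz: pw l mu = 0) by (unfold pw; destruct (Rlt_dec 0 l); [lra|auto]).
      rewrite Hz, pow_i by lia. rewrite Rmult_0_r. left. apply Rmult_lt_0_compat; auto. }
  assert (Hb := pw_sq_bound l L mu m (conj Hp (proj2 Hl)) Hmu).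
  assert (Hf: 0 <= (a / (l + a)) ^ 2) by apply pow2_ge_0.
  assert (H0: Rpower l (2*m) <= Rpower (l+a) (2*m)) by (apply Rle_Rpower_l; lra).
  assert (H1: Rpower (l+a) (2*m) * (a / (l + a)) ^ 2 <= Rpower a (2*m)).
  { replace ((a / (l + a)) ^ 2) with (Rpower a (INR 2) / Rpower (l+a) (INR 2)).
    2:{ rewrite !Rpower_pow by lra. fs. }
    rewrite Rmult_comm. apply Rpow_ratio. lra. simpl. lra. }
  set (f := (a / (l + a)) ^ 2) in *. set (K := Rpower L (2 * (mu - m))) in *.
  set (P := pw l mu ^ 2) in *.
  apply Rle_trans with (f * (K * Rpower l (2 * m))). apply Rmult_le_compat_l; auto.
  apply Rle_trans with (K * (Rpower (l+a) (2*m) * f)).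
  - replace (f * (K * Rpower l (2 * m))) with (K * (Rpower l (2 * m) * f)) by ring.
    apply Rmult_le_compat_l. lra. apply Rmult_le_compat_r; auto.
  - apply Rmult_le_compat_l; lra.
Qed.

Lemma R_Gx l L a mu m om : 0 <= l <= L -> 0 < a -> 0 < m <= 1/2 -> m <= mu ->
  0 <= a * l / (l + a) ^ 3 * (l * (pw l mu * om) ^ 2) <= Rpower L (2 * (mu - m)) * Rpower a (2 * m) * om ^ 2.
Proof.
  intros Hl Ha Hm Hmu.
  assert (Hc: 0 <= a * l / (l + a) ^ 3 * l <= a / (l + a)).
  { split. apply Rmult_le_pos; [|lra]. apply Rle_mult_inv_pos. nra. apply pow_lt; lra.
    replace (a * l / (l + a) ^ 3 * l) with (a / (l+a) * (l*l/((l+a)*(l+a)))) by fs.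
    destruct (frac_le1 l a (proj1 Hl) Ha).
    assert (l * l / ((l + a) * (l + a)) <= 1).
    { unfold Rdiv.
      apply Rmult_le_reg_r with ((l + a) * (l + a)). nra.
      rewrite !Rmult_assoc, Rinv_l by nra. nra. }
    assert (0 <= l * l / ((l + a) * (l + a))). apply Rle_mult_inv_pos; nra.
    nra. }
  replace (a * l / (l + a) ^ 3 * (l * (pw l mu * om) ^ 2)) with ((a * l / (l + a) ^ 3 * l) * pw l mu ^ 2 * om ^ 2) by ring.
  split. apply Rmult_le_pos; [|apply pow2_ge_0]. apply Rmult_le_pos. lra. apply pow2_ge_0.
  apply Rmult_le_compat_r. apply pow2_ge_0.
  destruct (Rlt_dec 0 l) as [Hp|Hp].
  2:{ assert (Hz: pw l mu = 0) by (unfold pw; destruct (Rlt_dec 0 l); [lra|auto]).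
      rewrite Hz, pow_i by lia. rewrite Rmult_0_r. left. apply Rmult_lt_0_compat; apply Rpow_pos. }
  assert (Hb := pw_sq_bound l L mu m (conj Hp (proj2 Hl)) Hmu).
  assert (Rpower l (2*m) <= Rpower (l+a) (2*m)) by (apply Rle_Rpower_l; lra).
  assert (Rpower (l+a) (2*m) * (a / (l + a)) <= Rpower a (2*m)).
  { replace (a / (l + a)) with (Rpower a 1 / Rpower (l+a) 1).
    2:{ rewrite !Rpower_1 by lra. reflexivity. }
    rewrite Rmult_comm. apply Rpow_ratio. lra. lra. }
  assert (HK0 := Rpow_pos L (2 * (mu - m))).
  assert (HK1 := Rpow_pos l (2 * m)).
  assert (0 <= pw l mu ^ 2) by apply pow2_ge_0.
  apply Rle_trans with (a / (l + a) * (Rpower L (2 * (mu - m)) * Rpower l (2 * m))).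
  apply Rmult_le_compat; lra.
  destruct (frac_le1 l a (proj1 Hl) Ha).
  set (f := a / (l + a)) in *. set (K := Rpower L (2 * (mu - m))) in *.
  apply Rle_trans with (K * (Rpower (l+a) (2*m) * f)).
  - replace (f * (K * Rpower l (2 * m))) with (K * (Rpower l (2 * m) * f)) by ring.
    apply Rmult_le_compat_l. lra. apply Rmult_le_compat_r; auto.
  - apply Rmult_le_compat_l; lra.
Qed.

Definition SF lam xd e a := ssum (fun i => xtik lam xd e a i ^ 2).
Definition SG lam xd e a := ssum (fun i => a * lam i / (lam i + a) ^ 3 * ydc lam xd e i ^ 2).
Definition SGx lam xd a := ssum (fun i => a * lam i / (lam i + a) ^ 3 * (lam i * xd i ^ 2)).
Definition SGe lam e a := ssum (fun i => a * lam i / (lam i + a) ^ 3 * e i ^ 2).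
Definition SNo lam e a := ssum (fun i => lam i / (lam i + a) ^ 2 * e i ^ 2).
Definition SAp lam xd a := ssum (fun i => (a / (lam i + a)) ^ 2 * xd i ^ 2).
Definition SHi lam e a := ssum (fun i => indic (leRb a (lam i)) (a / lam i * e i ^ 2)).
Definition SLo lam e a := ssum (fun i => indic (leRb (lam i) a) (lam i / a * e i ^ 2)).
Definition SH lam xd a := ssum (fun i => indic (leRb a (lam i)) (a / lam i * xd i ^ 2)).
Definition SL lam xd a := ssum (fun i => indic (leRb (lam i) a) (xd i ^ 2)).

Lemma w_nonneg l a : 0 <= l -> 0 < a -> 0 <= a * l / (l + a) ^ 3.
Proof. intros. apply Rle_mult_inv_pos. nra. apply pow_lt; lra. Qed.

Lemma div_le1 p q : 0 < q -> 0 <= p <= q -> p / q <= 1.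
Proof. intros. apply Rmult_le_reg_r with q. lra. unfold Rdiv. rewrite Rmult_assoc, Rinv_l by lra. lra. Qed.

Lemma hi_le l a e : 0 <= l -> 0 < a -> 0 <= indic (leRb a l) (a / l * e ^ 2) <= 1 * e ^ 2.
Proof.
  intros Hl Ha. assert (He := pow2_ge_0 e). unfold leRb, indic. destruct (Rle_dec a l).
  - split. apply Rmult_le_pos; auto. apply Rle_mult_inv_pos; lra.
    apply Rmult_le_compat_r; auto. apply div_le1; lra.
  - lra.
Qed.

Lemma lo_le l a e : 0 <= l -> 0 < a -> 0 <= indic (leRb l a) (l / a * e ^ 2) <= 1 * e ^ 2.
Proof.
  intros Hl Ha. assert (He := pow2_ge_0 e). unfold leRb, indic. destruct (Rle_dec l a).
  - split. apply Rmult_le_pos; auto. apply Rle_mult_inv_pos; lra.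
    apply Rmult_le_compat_r; auto. apply div_le1; lra.
  - lra.
Qed.

Lemma L_le l a x : 0 <= indic (leRb l a) (x ^ 2) <= 1 * x ^ 2.
Proof. assert (He := pow2_ge_0 x). unfold indic; destruct (leRb l a); lra. Qed.


Ltac tw := let n := fresh "n" in intro n; unfold xtik, ydc.

Lemma sNo lam e a : (forall i, 0 <= lam i) -> summ (fun i => e i ^ 2) -> 0 < a ->
  summ (fun i => lam i / (lam i + a) ^ 2 * e i ^ 2) /\ SNo lam e a <= / (4 * a) * ssum (fun i => e i ^ 2).
Proof. intros Hl He Ha. apply ssum_lin1; auto. intro n. apply T_No4; auto. Qed.

Lemma sGe lam e a : (forall i, 0 <= lam i) -> summ (fun i => e i ^ 2) -> 0 < a ->
  summ (fun i => a * lam i / (lam i + a) ^ 3 * e i ^ 2) /\ SGe lam e a <= 1 * SNo lam e a.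
Proof.
  intros Hl He Ha. apply ssum_lin1. intro n. rewrite Rmult_1_l. apply T_GeNo; auto.
  apply (sNo lam e a); auto.
Qed.

Lemma sF lam xd e a : (forall i, 0 <= lam i) -> summ (fun i => xd i ^ 2) -> summ (fun i => e i ^ 2) -> 0 < a ->
  summ (fun i => xtik lam xd e a i ^ 2) /\ SF lam xd e a <= 2 * ssum (fun i => xd i ^ 2) + 2 * SNo lam e a.
Proof.
  intros Hl Hx He Ha. apply ssum_lin; auto. tw. split. apply pow2_ge_0. apply T_F; auto.
  apply (sNo lam e a); auto.
Qed.

Lemma sG lam xd e a : (forall i, 0 <= lam i) -> summ (fun i => xd i ^ 2) -> summ (fun i => e i ^ 2) -> 0 < a ->
  summ (fun i => a * lam i / (lam i + a) ^ 3 * ydc lam xd e i ^ 2) /\ SG lam xd e a <= 1 * SF lam xd e a.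
Proof.
  intros Hl Hx He Ha. apply ssum_lin1. tw. rewrite T_Gid by auto.
  destruct (frac_le1 (lam n) a (Hl n) Ha). assert (H2 := pow2_ge_0 (sqrt (lam n) / (lam n + a) * (sqrt (lam n) * xd n + e n))).
  split. nra. nra.
  apply (sF lam xd e a); auto.
Qed.

Lemma sG_low lam xd e a L : (forall i, 0 <= lam i) -> (forall i, lam i <= L) -> summ (fun i => xd i ^ 2) -> summ (fun i => e i ^ 2) -> 0 < a ->
  a / (L + a) * SF lam xd e a <= SG lam xd e a.
Proof.
  intros Hl HL Hx He Ha. destruct (sF lam xd e a) as [HF _]; auto.
  destruct (sG lam xd e a) as [HG _]; auto.
  unfold SF. rewrite <- ssum_scal by auto. apply ssum_le; auto.
  tw. rewrite T_Gid by auto.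
  assert (H2 := pow2_ge_0 (sqrt (lam n) / (lam n + a) * (sqrt (lam n) * xd n + e n))).
  assert (0 <= Rmin 0 0) by (unfold Rmin; destruct Rle_dec; lra).
  assert (0 <= a / (L + a)) by (apply Rle_mult_inv_pos; specialize (Hl n); specialize (HL n); lra).
  assert (a / (L + a) <= a / (lam n + a)).
  { specialize (Hl n); specialize (HL n). apply div_le; try lra. nra. }
  split; nra.
Qed.

Lemma sGx lam xd e a : (forall i, 0 <= lam i) -> summ (fun i => xd i ^ 2) -> summ (fun i => e i ^ 2) -> 0 < a ->
  summ (fun i => a * lam i / (lam i + a) ^ 3 * (lam i * xd i ^ 2)) /\ SGx lam xd a <= 2 * SG lam xd e a + 2 * SGe lam e a.
Proof.
  intros Hl Hx He Ha. apply ssum_lin.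
  - intro n. assert (Hw := w_nonneg (lam n) a (Hl n) Ha). assert (Ht := T_y3 (lam n) (xd n) (e n) (Hl n)).
    assert (0 <= lam n * xd n ^ 2) by (apply Rmult_le_pos; auto using pow2_ge_0).
    unfold ydc. split. apply Rmult_le_pos; auto.
    apply Rle_trans with (a * lam n / (lam n + a) ^ 3 * (2 * (sqrt (lam n) * xd n + e n) ^ 2 + 2 * e n ^ 2)).
    apply Rmult_le_compat_l; auto. right; ring.
  - apply (sG lam xd e a); auto.
  - apply (sGe lam e a); auto.
Qed.

Lemma sG_up lam xd e a : (forall i, 0 <= lam i) -> summ (fun i => xd i ^ 2) -> summ (fun i => e i ^ 2) -> 0 < a ->
  SG lam xd e a <= 2 * SGx lam xd a + 2 * SGe lam e a.
Proof.
  intros Hl Hx He Ha. apply ssum_lin.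
  - intro n. assert (Hw := w_nonneg (lam n) a (Hl n) Ha). assert (Ht := T_y1 (lam n) (xd n) (e n) (Hl n)).
    unfold ydc. split. apply Rmult_le_pos; auto using pow2_ge_0.
    apply Rle_trans with (a * lam n / (lam n + a) ^ 3 * (2 * (lam n * xd n ^ 2) + 2 * e n ^ 2)).
    apply Rmult_le_compat_l; auto. right; ring.
  - apply (sGx lam xd e a); auto.
  - apply (sGe lam e a); auto.
Qed.

Lemma sGe_up lam xd e a : (forall i, 0 <= lam i) -> summ (fun i => xd i ^ 2) -> summ (fun i => e i ^ 2) -> 0 < a ->
  SGe lam e a <= 2 * SG lam xd e a + 2 * SGx lam xd a.
Proof.
  intros Hl Hx He Ha. apply ssum_lin.
  - intro n. assert (Hw := w_nonneg (lam n) a (Hl n) Ha). assert (Ht := T_y2 (lam n) (xd n) (e n) (Hl n)).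
    unfold ydc. split. apply Rmult_le_pos; auto using pow2_ge_0.
    apply Rle_trans with (a * lam n / (lam n + a) ^ 3 * (2 * (sqrt (lam n) * xd n + e n) ^ 2 + 2 * (lam n * xd n ^ 2))).
    apply Rmult_le_compat_l; auto. right; ring.
  - apply (sG lam xd e a); auto.
  - apply (sGx lam xd e a); auto.
Qed.

Lemma sHi lam e a : (forall i, 0 <= lam i) -> summ (fun i => e i ^ 2) -> 0 < a ->
  summ (fun i => indic (leRb a (lam i)) (a / lam i * e i ^ 2)).
Proof. intros. apply (ssum_lin1 _ (fun i => e i ^ 2) 1); auto. intro n. apply hi_le; auto. Qed.
Lemma sLo lam e a : (forall i, 0 <= lam i) -> summ (fun i => e i ^ 2) -> 0 < a ->
  summ (fun i => indic (leRb (lam i) a) (lam i / a * e i ^ 2)).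
Proof. intros. apply (ssum_lin1 _ (fun i => e i ^ 2) 1); auto. intro n. apply lo_le; auto. Qed.
Lemma sH lam xd a : (forall i, 0 <= lam i) -> summ (fun i => xd i ^ 2) -> 0 < a ->
  summ (fun i => indic (leRb a (lam i)) (a / lam i * xd i ^ 2)).
Proof. intros. apply (ssum_lin1 _ (fun i => xd i ^ 2) 1); auto. intro n. apply hi_le; auto. Qed.
Lemma sL lam xd a : summ (fun i => xd i ^ 2) ->
  summ (fun i => indic (leRb (lam i) a) (xd i ^ 2)).
Proof. intros. apply (ssum_lin1 _ (fun i => xd i ^ 2) 1); auto. intro n. apply L_le; auto. Qed.

Lemma sMC lam e a : (forall i, 0 <= lam i) -> summ (fun i => e i ^ 2) -> 0 < a ->
  SNo lam e a <= / a * SHi lam e a + / a * SLo lam e a.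
Proof.
  intros. apply ssum_lin; auto using sHi, sLo. intro n. split. apply T_No4; auto. apply T_NoMC; auto.
Qed.

Lemma sLoGe lam e a : (forall i, 0 <= lam i) -> summ (fun i => e i ^ 2) -> 0 < a ->
  SLo lam e a <= (8 * a) * SGe lam e a.
Proof.
  intros. apply ssum_lin1. intro n. apply T_GeLo; auto. apply (sGe lam e a); auto.
Qed.

Lemma sHGx lam xd e a : (forall i, 0 <= lam i) -> summ (fun i => xd i ^ 2) -> summ (fun i => e i ^ 2) -> 0 < a ->
  SH lam xd a <= 8 * SGx lam xd a.
Proof.
  intros. apply ssum_lin1. intro n. apply T_GxH; auto. apply (sGx lam xd e a); auto.
Qed.

Lemma sAp lam xd a : (forall i, 0 <= lam i) -> summ (fun i => xd i ^ 2) -> 0 < a ->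
  summ (fun i => (a / (lam i + a)) ^ 2 * xd i ^ 2) /\ SAp lam xd a <= 1 * SL lam xd a + 1 * SH lam xd a.
Proof.
  intros. apply ssum_lin; auto using sH, sL. intro n. rewrite !Rmult_1_l. apply T_ApLoH; auto.
Qed.

Lemma serr lam xd e a : (forall i, 0 <= lam i) -> summ (fun i => xd i ^ 2) -> summ (fun i => e i ^ 2) -> 0 < a ->
  ssum (fun i => (xtik lam xd e a i - xd i) ^ 2) <= 2 * SAp lam xd a + 2 * SNo lam e a.
Proof.
  intros. apply ssum_lin. tw. split. apply pow2_ge_0. apply T_err; auto.
  apply (sAp lam xd a); auto. apply (sNo lam e a); auto.
Qed.

Lemma sRpow lam xd om a L mu m : (forall i, 0 <= lam i <= L) -> summ (fun i => om i ^ 2) ->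
  (forall i, xd i = pw (lam i) mu * om i) -> 0 < a -> 0 < m <= 1/2 -> m <= mu ->
  SGx lam xd a <= Rpower L (2 * (mu - m)) * Rpower a (2 * m) * ssum (fun i => om i ^ 2) /\
  SAp lam xd a <= Rpower L (2 * (mu - m)) * Rpower a (2 * m) * ssum (fun i => om i ^ 2).
Proof.
  intros HL Ho Hs Ha Hm Hmu. split; apply ssum_lin1; auto; intro n; rewrite Hs.
  - apply R_Gx; auto.
  - apply R_Ap; auto.
Qed.

Lemma bound_lam (lam : nat -> R) : (forall i, 0 <= lam i) -> Un_cv lam 0 ->
  exists L, 1 <= L /\ forall i, lam i <= L.
Proof.
  intros Hl Hc. destruct (Hc 1 Rlt_0_1) as [N HN].
  exists (1 + sum_f_R0 lam N). split.
  { assert (0 <= sum_f_R0 lam N) by (apply cond_pos_sum; auto). lra. }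
  intro i. destruct (Compare_dec.le_lt_dec N i) as [Hi|Hi].
  - specialize (HN i Hi). unfold R_dist in HN. rewrite Rminus_0_r, Rabs_pos_eq in HN by auto.
    assert (0 <= sum_f_R0 lam N) by (apply cond_pos_sum; auto). lra.
  - assert (lam i <= sum_f_R0 lam N).
    { clear HN. induction N. lia. destruct (Nat.eq_dec i N) as [->|Hne].
      + simpl. pose proof (Hl (S N)). assert (lam N <= sum_f_R0 lam N) by (apply sum_ge_term; auto). lra.
      + simpl. pose proof (Hl (S N)). assert (lam i <= sum_f_R0 lam N) by (apply IHN; lia). lra. }
    lra.
Qed.

Lemma Rpower_le_base1 x p q : 0 < x <= 1 -> p <= q -> Rpower x q <= Rpower x p.
Proof.
  intros Hx Hpq. unfold Rpower.
  destruct (Req_dec x 1) as [->|Hne]. rewrite ln_1, !Rmult_0_r. lra.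
  destruct (Req_dec p q) as [->|Hne2]; [lra|].
  left. apply exp_increasing.
  assert (ln x < 0). { rewrite <- ln_1. apply ln_increasing; lra. }
  nra.
Qed.

Lemma Rpower_le1 x p : 0 < x <= 1 -> 0 <= p -> Rpower x p <= 1.
Proof.
  intros Hx Hp. rewrite <- (Rpower_O x) by lra. apply Rpower_le_base1; lra.
Qed.

Lemma small_pow p t : 0 < p -> 0 < t -> exists d, 0 < d <= 1 /\ forall x, 0 < x <= d -> Rpower x p <= t.
Proof.
  intros Hp Ht. exists (Rmin 1 (Rpower t (/ p))). assert (H0 := Rpow_pos t (/ p)). split.
  - split. apply Rmin_glb_lt; lra. apply Rmin_l.
  - intros x Hx. apply Rle_trans with (Rpower (Rpower t (/ p)) p).
    + apply Rle_Rpower_l. lra. split. lra. eapply Rle_trans. apply Hx. apply Rmin_r.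
    + rewrite Rpower_mult, Rinv_l, Rpower_1 by lra. lra.
Qed.

Lemma Rpower_sq x r : (Rpower x r) ^ 2 = Rpower x (2 * r).
Proof. simpl. rewrite Rmult_1_r, <- Rpower_plus. f_equal. ring. Qed.

Lemma ratio_le G1 F1 G2 F2 : 0 < F1 -> 0 < F2 -> 0 <= G1 -> 0 <= G2 ->
  sqrt G1 / sqrt F1 <= sqrt G2 / sqrt F2 -> G1 <= G2 / F2 * F1.
Proof.
  intros HF1 HF2 HG1 HG2 H.
  rewrite <- !sqrt_div_alt in H by auto.
  apply sqrt_le_0 in H.
  - apply Rmult_le_reg_r with (/ F1). apply Rinv_0_lt_compat; lra.
    replace (G2 / F2 * F1 * / F1) with (G2 / F2) by (field; lra). exact H.
  - apply Rle_mult_inv_pos; lra.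
  - apply Rle_mult_inv_pos; lra.
Qed.

Lemma sqrt_bound S A r : 0 <= S -> 0 <= A -> 0 <= r -> S <= A * r ^ 2 -> sqrt S <= sqrt A * r.
Proof.
  intros HS HA Hr H. rewrite <- (sqrt_pow2 r) by auto. rewrite <- sqrt_mult by (auto; apply pow2_ge_0).
  apply sqrt_le_1; auto. apply Rmult_le_pos; auto. apply pow2_ge_0.
Qed.

Lemma xtik_lb l a x e d : 0 < l -> 0 < a <= l -> e ^ 2 <= d ^ 2 -> 0 <= d <= sqrt l * Rabs x / 4 ->
  x ^ 2 / 16 <= (sqrt l / (l + a) * (sqrt l * x + e)) ^ 2.
Proof.
  intros Hl Ha He Hd. assert (Hs := sqrt_sqrt l (Rlt_le _ _ Hl)). assert (Hsp := sqrt_lt_R0 l Hl).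
  set (s := sqrt l) in *. rewrite <- Hs. rewrite <- Hs in Ha.
  assert (Habs : Rabs e <= d).
  { rewrite <- (Rabs_pos_eq d) by lra. apply Rsqr_le_abs_0. unfold Rsqr. simpl in He. lra. }
  replace (s / (s*s + a) * (s * x + e)) with ((s*s*x + s*e)/(s*s+a)) by fs.
  set (N := s*s*x + s*e).
  assert (Hx: Rabs N >= s * s * Rabs x * 3 / 4).
  { assert (Rabs (s*s*x) = s*s*Rabs x) by (rewrite !Rabs_mult, !Rabs_pos_eq by lra; ring).
    assert (Rabs (s*e) <= s * d) by (rewrite Rabs_mult, Rabs_pos_eq by lra; apply Rmult_le_compat_l; lra).
    assert (Rabs N >= Rabs (s*s*x) - Rabs (s*e)).
    { pose proof (Rabs_triang_inv (s*s*x) (-(s*e))) as H1. rewrite Rabs_Ropp in H1.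
      replace (s*s*x - - (s*e)) with N in H1 by (unfold N; ring). lra. }
    assert (s * d <= s * (s * Rabs x / 4)) by (apply Rmult_le_compat_l; lra).
    lra. }
  assert (Heq : Rabs (N / (s*s+a)) * (s*s+a) = Rabs N).
  { rewrite Rabs_div by nra. rewrite (Rabs_pos_eq (s*s+a)) by nra. field. nra. }
  set (t := Rabs (N / (s*s+a))) in *.
  assert (Ht0 : 0 <= t) by apply Rabs_pos.
  assert (HA := Rabs_pos x).
  assert (Hts : t >= Rabs x / 4).
  { destruct (Rlt_dec t (Rabs x / 4)) as [Hlt|]; [|lra].
    assert (t * (s*s+a) <= t * (2*(s*s))) by (apply Rmult_le_compat_l; lra).
    assert (t * (2 * (s*s)) <= Rabs x / 4 * (2*(s*s))) by (apply Rmult_le_compat_r; nra).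
    assert (s*s*Rabs x = 0) by nra. assert (Rabs x = 0) by nra. lra. }
  rewrite <- (pow2_abs (N / (s*s+a))). fold t. rewrite <- (pow2_abs x). nra.
Qed.

Lemma xtik_pos l a x e d : 0 < l -> 0 < a -> e ^ 2 <= d ^ 2 -> 0 <= d <= sqrt l * Rabs x / 4 -> x <> 0 ->
  0 < (sqrt l / (l + a) * (sqrt l * x + e)) ^ 2.
Proof.
  intros Hl Ha He Hd Hx. assert (Hsp := sqrt_lt_R0 l Hl).
  assert (Habs : Rabs e <= d).
  { rewrite <- (Rabs_pos_eq d) by lra. apply Rsqr_le_abs_0. unfold Rsqr. simpl in He. lra. }
  assert (Hax : 0 < Rabs x) by (apply Rabs_pos_lt; auto).
  assert (Hne : sqrt l * x + e <> 0).
  { intro H0. assert (e = - (sqrt l * x)) by lra. rewrite H in Habs.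
    rewrite Rabs_Ropp, Rabs_mult, (Rabs_pos_eq (sqrt l)) in Habs by lra. nra. }
  assert (0 < sqrt l / (l + a)) by (apply Rdiv_lt_0_compat; lra).
  assert (H1: sqrt l / (l + a) * (sqrt l * x + e) <> 0) by (apply Rmult_integral_contrapositive; split; lra).
  assert (H2 := Rsqr_pos_lt _ H1). unfold Rsqr in H2. simpl. lra.
Qed.

Theorem mainTheorem9
  (lam : nat -> R) (alpha_max C2 mu Cs : R) (om xd : nat -> R)
  (Hlam : forall i, 0 <= lam i) (Hcomp : Un_cv lam 0)
  (Hamax : 0 < alpha_max)
  (Hmu : 0 < mu <= 1)
  (Hom : ex_series (fun i => om i ^ 2))
  (HomCs : sqrt (ssum (fun i => om i ^ 2)) <= Cs)
  (Hsrc : forall i, xd i = pw (lam i) mu * om i)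
  (Hnz : exists i, xd i <> 0) :
  let mut := Rmin mu (1/2) in
  exists C delta0, 0 < C /\ 0 < delta0 /\
    (forall delta (e : nat -> R) (astar : R),
       0 < delta <= delta0 ->
       ex_series (fun i => e i ^ 2) ->
       sqrt (ssum (fun i => e i ^ 2)) <= delta ->
       MC2 lam e alpha_max C2 ->
       0 < astar < alpha_max ->
       (forall alpha, 0 < alpha < alpha_max ->
          psi_SLR lam xd e astar <= psi_SLR lam xd e alpha) ->
       err lam xd e astar
         <= C * Rpower delta (2 * mut / (2 * mut + 1) * (2 * mut))) /\
    ((exists D, 0 < D /\
        forall alpha, 0 < alpha < alpha_max ->
          ssum (fun i => indic (leRb (lam i) alpha) (xd i ^ 2))
          <= D * ssum (fun i => indic (leRb alpha (lam i)) (alpha / lam i * xd i ^ 2))) ->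
     forall delta (e : nat -> R) (astar : R),
       0 < delta <= delta0 ->
       ex_series (fun i => e i ^ 2) ->
       sqrt (ssum (fun i => e i ^ 2)) <= delta ->
       MC2 lam e alpha_max C2 ->
       0 < astar < alpha_max ->
       (forall alpha, 0 < alpha < alpha_max ->
          psi_SLR lam xd e astar <= psi_SLR lam xd e alpha) ->
       err lam xd e astar <= C * Rpower delta (2 * mut / (2 * mut + 1))).
Proof.
  intros mut.
  assert (Hm : 0 < mut <= 1/2) by (unfold mut; split; [apply Rmin_glb_lt; lra | apply Rmin_r]).
  assert (Hmm : mut <= mu) by apply Rmin_l.
  clearbody mut.
  destruct (bound_lam lam Hlam Hcomp) as [L [HL1 HL]].
  assert (HlamL : forall i, 0 <= lam i <= L) by (intro i; split; auto).
  set (KL := Rpower L (2 * (mu - mut))).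
  assert (HKL : 0 < KL) by apply Rpow_pos.
  set (Om := ssum (fun i => om i ^ 2)).
  assert (HOm : 0 <= Om) by (apply ssum_nonneg; auto; intro; apply pow2_ge_0).
  assert (Hx : summ (fun i => xd i ^ 2)).
  { apply (ssum_lin1 _ (fun i => om i ^ 2) (Rpower L mu ^ 2)); auto. intro n. rewrite Hsrc.
    split. apply pow2_ge_0. rewrite Rpow_mult_distr. apply Rmult_le_compat_r. apply pow2_ge_0.
    unfold pw. destruct Rlt_dec.
    - apply pow_incr. split. left; apply Rpow_pos. apply Rle_Rpower_l. lra. split; [auto|apply HL].
    - rewrite pow_i by lia. apply pow2_ge_0. }
  set (X := ssum (fun i => xd i ^ 2)).
  assert (HX : 0 <= X) by (apply ssum_nonneg; auto; intro; apply pow2_ge_0).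
  destruct Hnz as [i0 Hx0].
  assert (Hl0 : 0 < lam i0).
  { destruct (Rlt_dec 0 (lam i0)) as [H|H]; auto. exfalso. apply Hx0. rewrite Hsrc. unfold pw.
    destruct Rlt_dec; [contradiction|ring]. }
  set (l0 := lam i0) in *. set (x0 := xd i0) in *.
  assert (Hx02 : 0 < x0 ^ 2) by (apply pow2_gt_0; auto).
  set (cG := KL * Om).
  assert (HcG : 0 <= cG) by (unfold cG; apply Rmult_le_pos; lra).
  set (K1 := 32 / x0 ^ 2 * (cG + 1/4)).
  assert (HK1 : 0 < K1) by (unfold K1; apply Rmult_lt_0_compat; [apply Rdiv_lt_0_compat|]; lra).
  set (K2 := 8 * (Rabs C2 + 1)).
  assert (HK2 : 0 < K2) by (unfold K2; pose proof (Rabs_pos C2); lra).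
  set (p := 4 * mut / (2 * mut + 1)). set (q := 2 / (2 * mut + 1)).
  assert (Hp : 0 < p) by (unfold p; apply Rdiv_lt_0_compat; lra).
  assert (Hq : 0 < q) by (unfold q; apply Rdiv_lt_0_compat; lra).
  assert (HminP : 0 < Rmin l0 (alpha_max / 2)) by (apply Rmin_glb_lt; lra).
  destruct (small_pow q (Rmin l0 (alpha_max / 2)) Hq HminP) as [d1 [Hd1 Hd1']].
  assert (HK21 : 0 < / (8 * K2 * K1)) by (apply Rinv_0_lt_compat; nra).
  destruct (small_pow p (/ (8 * K2 * K1)) Hp HK21) as [d2 [Hd2 Hd2']].
  set (d3 := sqrt l0 * Rabs x0 / 4).
  assert (Hd3 : 0 < d3).
  { unfold d3. assert (0 < sqrt l0) by (apply sqrt_lt_R0; auto).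
    assert (0 < Rabs x0) by (apply Rabs_pos_lt; auto). nra. }
  set (delta0 := Rmin (Rmin d1 d2) d3).
  assert (Hdelta0 : 0 < delta0) by (unfold delta0; repeat apply Rmin_glb_lt; lra).
  set (K4 := 8 * K2 * K1 * X + 4 * K2 * cG + 1/4).
  set (K3 := K1 * (L + alpha_max)).
  assert (HK3 : 0 < K3) by (unfold K3; nra).
  assert (HK4 : 1/4 <= K4) by (unfold K4; assert (0 <= K2 * K1 * X) by (apply Rmult_le_pos; nra); nra).

  assert (core : forall delta (e : nat -> R) (a : R),
       0 < delta <= delta0 ->
       ex_series (fun i => e i ^ 2) ->
       sqrt (ssum (fun i => e i ^ 2)) <= delta ->
       MC2 lam e alpha_max C2 ->
       0 < a < alpha_max ->
       (forall alpha, 0 < alpha < alpha_max ->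
          psi_SLR lam xd e a <= psi_SLR lam xd e alpha) ->
       0 < Rpower delta p <= 1 /\
       SNo lam e a <= K4 * Rpower delta p /\
       a <= K3 * Rpower delta p /\
       SG lam xd e a <= K1 * Rpower delta p * SF lam xd e a /\
       SF lam xd e a <= 2 * X + 2 * SNo lam e a /\
       (a <= Rpower delta q -> Rpower a (2 * mut) <= Rpower delta p) /\
       Rpower delta q < alpha_max).
  { intros delta e a Hd He HeE HMC Ha Hmin.
    assert (Hd1x : delta <= d1) by (eapply Rle_trans; [apply Hd|]; unfold delta0; eapply Rle_trans; apply Rmin_l).
    assert (Hd2x : delta <= d2) by (eapply Rle_trans; [apply Hd|]; unfold delta0; eapply Rle_trans; [apply Rmin_l|apply Rmin_r]).
    assert (Hd3x : delta <= d3) by (eapply Rle_trans; [apply Hd|]; unfold delta0; apply Rmin_r).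
    set (E := ssum (fun i => e i ^ 2)) in *.
    assert (HE0 : 0 <= E) by (apply ssum_nonneg; auto; intro; apply pow2_ge_0).
    assert (HEd : E <= delta ^ 2).
    { rewrite <- (sqrt_sqrt E HE0). pose proof (sqrt_pos E). simpl. nra. }
    assert (He0 : e i0 ^ 2 <= delta ^ 2).
    { eapply Rle_trans; [|apply HEd]. apply (ssum_ge_term (fun i => e i ^ 2)); auto. intro; apply pow2_ge_0. }
    set (ad := Rpower delta q). set (eps := Rpower delta p).
    assert (Had : ad <= Rmin l0 (alpha_max / 2)) by (apply Hd1'; lra).
    assert (Had1 : ad <= l0) by (eapply Rle_trans; [apply Had| apply Rmin_l]).
    assert (Had2 : ad <= alpha_max / 2) by (eapply Rle_trans; [apply Had| apply Rmin_r]).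
    assert (Had0 : 0 < ad) by apply Rpow_pos.
    assert (Heps0 : 0 < eps) by apply Rpow_pos.
    assert (Heps1 : eps <= 1) by (apply Rpower_le1; lra).
    assert (Heps2 : eps <= / (8 * K2 * K1)) by (apply Hd2'; lra).
    assert (Hepsad : Rpower ad (2 * mut) = eps).
    { unfold ad, eps. rewrite Rpower_mult. f_equal. unfold p, q. field. lra. }
    assert (Hdelta2 : delta ^ 2 = eps * ad).
    { unfold eps, ad. rewrite <- Rpower_plus. replace (p + q) with (INR 2) by (unfold p, q; simpl; field; lra).
      rewrite Rpower_pow by lra. reflexivity. }
    split. lra.
    destruct (sF lam xd e ad) as [HsF _]; auto; try lra.
    assert (HFad : x0 ^ 2 / 16 <= SF lam xd e ad).
    { eapply Rle_trans; [|apply (ssum_ge_term (fun i => xtik lam xd e ad i ^ 2) i0); auto].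
      unfold xtik, ydc. fold l0 x0. apply (xtik_lb l0 ad x0 (e i0) delta); [auto| split; lra | auto | unfold d3 in Hd3x; split; lra].
      intro; apply pow2_ge_0. }
    destruct (sF lam xd e a) as [HsFa HFa]; auto; try lra. fold X in HFa.
    assert (HFa0 : 0 < SF lam xd e a).
    { eapply Rlt_le_trans; [|apply (ssum_ge_term (fun i => xtik lam xd e a i ^ 2) i0); auto].
      unfold xtik, ydc. fold l0 x0. apply (xtik_pos l0 a x0 (e i0) delta); [auto| lra | auto | unfold d3 in Hd3x; split; lra | auto].
      intro; apply pow2_ge_0. }
    assert (HNad : SNo lam e ad <= eps / 4).
    { destruct (sNo lam e ad) as [_ H]; auto. eapply Rle_trans; [apply H|].
      fold E. apply Rle_trans with (/ (4 * ad) * delta ^ 2).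
      apply Rmult_le_compat_l; auto. left; apply Rinv_0_lt_compat; lra.
      rewrite Hdelta2. right. field. lra. }
    assert (HGad : SG lam xd e ad <= 2 * (cG + 1/4) * eps).
    { assert (H1 := sG_up lam xd e ad Hlam Hx He Had0).
      destruct (sRpow lam xd om ad L mu mut) as [H2 _]; auto.
      destruct (sGe lam e ad) as [_ H3]; auto.
      rewrite Hepsad in H2. fold KL Om in H2.
      assert (KL * eps * Om = cG * eps) by (unfold cG; ring).
      lra. }
    assert (HGad0 : 0 <= SG lam xd e ad).
    { apply ssum_nonneg. intro n. apply Rmult_le_pos. apply w_nonneg; auto. apply pow2_ge_0.
      apply (sG lam xd e ad); auto. }
    set (rho := SG lam xd e ad / SF lam xd e ad).
    assert (Hrho0 : 0 <= rho) by (apply Rle_mult_inv_pos; lra).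
    assert (HrhoK : rho <= K1 * eps).
    { unfold rho. apply Rmult_le_reg_r with (SF lam xd e ad). lra. unfold Rdiv.
      rewrite Rmult_assoc, Rinv_l, Rmult_1_r by lra.
      apply Rle_trans with (2 * (cG + 1/4) * eps); auto.
      apply Rle_trans with (K1 * eps * (x0 ^ 2 / 16)).
      - right. unfold K1. field. lra.
      - apply Rmult_le_compat_l; auto. nra. }
    assert (Hmin' : psi_SLR lam xd e a <= psi_SLR lam xd e ad) by (apply Hmin; lra).
    change (sqrt (SG lam xd e a) / sqrt (SF lam xd e a) <= sqrt (SG lam xd e ad) / sqrt (SF lam xd e ad)) in Hmin'.
    assert (HGa0 : 0 <= SG lam xd e a).
    { apply ssum_nonneg. intro n. apply Rmult_le_pos. apply w_nonneg; auto; lra. apply pow2_ge_0.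
      apply (sG lam xd e a); auto; lra. }
    assert (HFad0 : 0 < SF lam xd e ad) by lra.
    assert (HGa := ratio_le _ _ _ _ HFa0 HFad0 HGa0 HGad0 Hmin'). fold rho in HGa.
    assert (HGaK : SG lam xd e a <= K1 * eps * SF lam xd e a) by (apply Rle_trans with (rho * SF lam xd e a); auto; apply Rmult_le_compat_r; lra).
    assert (Ha3 : a <= K3 * eps).
    { assert (H1 := sG_low lam xd e a L Hlam HL Hx He ltac:(lra)).
      assert (H2 : a / (L + a) <= rho).
      { apply Rmult_le_reg_r with (SF lam xd e a); lra. }
      assert (H3 : a = a / (L + a) * (L + a)) by (field; lra).
      unfold K3. rewrite H3. apply Rle_trans with (K1 * eps * (L + a)).
      apply Rmult_le_compat_r; lra.
      assert (0 < K1 * eps) by nra.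
      apply Rle_trans with (K1 * eps * (L + alpha_max)). apply Rmult_le_compat_l; lra. right; ring. }
    assert (HN : SNo lam e a <= K4 * eps).
    { destruct (Rle_dec ad a) as [Hle|Hlt].
      - destruct (sNo lam e a) as [_ H]; auto; try lra. eapply Rle_trans; [apply H|].
        fold E. apply Rle_trans with (/ (4 * a) * delta ^ 2).
        apply Rmult_le_compat_l; auto. left; apply Rinv_0_lt_compat; lra.
        rewrite Hdelta2. apply Rle_trans with (eps / 4).
        + apply Rmult_le_reg_r with (4 * a). lra.
          replace (/ (4 * a) * (eps * ad) * (4 * a)) with (eps * ad) by (field; lra).
          replace (eps / 4 * (4 * a)) with (eps * a) by (field; lra).
          apply Rmult_le_compat_l; lra.
        + nra.
      - assert (Halt : a < ad) by lra.
        assert (HMCa := HMC a ltac:(lra)).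
        fold (SHi lam e a) (SLo lam e a) in HMCa.
        assert (H1 := sMC lam e a Hlam He ltac:(lra)).
        assert (H2 := sLoGe lam e a Hlam He ltac:(lra)).
        assert (HLo0 : 0 <= SLo lam e a).
        { apply ssum_nonneg. intro n. apply lo_le; auto; lra. apply sLo; auto; lra. }
        assert (HHi : SHi lam e a <= Rabs C2 * SLo lam e a).
        { eapply Rle_trans; [apply HMCa|]. apply Rmult_le_compat_r; auto. apply Rle_abs. }
        assert (HNGe : SNo lam e a <= K2 * SGe lam e a).
        { assert (Hia : 0 < / a) by (apply Rinv_0_lt_compat; lra).
          apply Rle_trans with (/ a * ((Rabs C2 + 1) * SLo lam e a)).
          - replace (/ a * ((Rabs C2 + 1) * SLo lam e a)) with (/ a * (Rabs C2 * SLo lam e a) + / a * SLo lam e a) by ring.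
            assert (/ a * SHi lam e a <= / a * (Rabs C2 * SLo lam e a)) by (apply Rmult_le_compat_l; lra).
            lra.
          - apply Rle_trans with (/ a * ((Rabs C2 + 1) * (8 * a * SGe lam e a))).
            + apply Rmult_le_compat_l. lra. apply Rmult_le_compat_l. pose proof (Rabs_pos C2); lra. auto.
            + right. unfold K2. field. lra. }
        assert (H3 := sGe_up lam xd e a Hlam Hx He ltac:(lra)).
        destruct (sRpow lam xd om a L mu mut) as [H4 _]; auto; try lra.
        assert (Hpa : Rpower a (2 * mut) <= eps).
        { rewrite <- Hepsad. apply Rle_Rpower_l; lra. }
        fold KL Om in H4.
        assert (H5 : SGx lam xd a <= cG * eps).
        { eapply Rle_trans; [apply H4|]. replace (KL * Rpower a (2 * mut) * Om) with (cG * Rpower a (2 * mut)) by (unfold cG; ring).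
          apply Rmult_le_compat_l; auto. }
        set (N := SNo lam e a) in *.
        set (u := K1 * eps) in *.
        assert (Hu : 4 * K2 * u <= 1/2).
        { unfold u. apply Rle_trans with (4 * K2 * K1 * / (8 * K2 * K1)).
          replace (4 * K2 * (K1 * eps)) with (4 * K2 * K1 * eps) by ring.
          apply Rmult_le_compat_l; nra. right; field; lra. }
        assert (HN0 : 0 <= N). { apply ssum_nonneg. intro n. apply T_No4; auto; lra. apply sNo; auto; lra. }
        assert (HGx0 : 0 <= SGe lam e a). { apply ssum_nonneg. intro n. apply T_GeNo; auto; lra. apply sGe; auto; lra. }
        assert (Hfin : N <= K2 * (2 * (u * (2 * X + 2 * N)) + 2 * (cG * eps))).
        { eapply Rle_trans; [apply HNGe|]. apply Rmult_le_compat_l. lra.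
          assert (SG lam xd e a <= u * (2 * X + 2 * N)).
          { eapply Rle_trans; [apply HGaK|]. apply Rmult_le_compat_l. nra. auto. }
          lra. }
        assert (HuN : 4 * K2 * u * N <= 1/2 * N) by (apply Rmult_le_compat_r; auto).
        assert (HuX : 4 * K2 * u * X <= 4 * K2 * K1 * eps * X) by (right; unfold u; ring).
        unfold K4.
        replace (K2 * (2 * (u * (2 * X + 2 * N)) + 2 * (cG * eps))) with
          (4 * K2 * u * X + 4 * K2 * u * N + 2 * K2 * cG * eps) in Hfin by ring.
        assert (0 <= eps * (8 * K2 * K1 * X)) by (apply Rmult_le_pos; [lra|]; apply Rmult_le_pos; nra).
        nra. }
    split; [auto|]. split; [auto|]. split; [auto|]. split; [auto|]. split.
    - intros Hle. rewrite <- Hepsad. apply Rle_Rpower_l; lra.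
    - lra. }

  set (A1 := 2 * cG * Rpower K3 (2 * mut) + 2 * K4).
  assert (HA1 : 0 <= A1) by (unfold A1; pose proof (Rpow_pos K3 (2 * mut)); nra).
  assert (P1 : forall delta (e : nat -> R) (astar : R),
       0 < delta <= delta0 ->
       ex_series (fun i => e i ^ 2) ->
       sqrt (ssum (fun i => e i ^ 2)) <= delta ->
       MC2 lam e alpha_max C2 ->
       0 < astar < alpha_max ->
       (forall alpha, 0 < alpha < alpha_max ->
          psi_SLR lam xd e astar <= psi_SLR lam xd e alpha) ->
       err lam xd e astar
         <= sqrt A1 * Rpower delta (2 * mut / (2 * mut + 1) * (2 * mut))).
  { intros delta e a Hd He HeE HMC Ha Hmin.
    destruct (core delta e a Hd He HeE HMC Ha Hmin) as [Heps [HN [Ha3 [HG [HF [Hcase Had]]]]]].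
    set (eps := Rpower delta p) in *.
    replace (Rpower delta (2 * mut / (2 * mut + 1) * (2 * mut))) with (Rpower eps mut).
    2:{ unfold eps. rewrite Rpower_mult. f_equal. unfold p. field. lra. }
    unfold err, norm_seq. apply sqrt_bound.
    - apply ssum_nonneg. intro; apply pow2_ge_0.
      apply (ssum_lin _ (fun i => (a / (lam i + a)) ^ 2 * xd i ^ 2) (fun i => lam i / (lam i + a) ^ 2 * e i ^ 2) 2 2).
      intro n. split. apply pow2_ge_0. apply T_err; auto; lra.
      apply (sAp lam xd a); auto; lra. apply (sNo lam e a); auto; lra.
    - auto.
    - left; apply Rpow_pos.
    - rewrite Rpower_sq. eapply Rle_trans; [apply serr; auto; lra|].
      destruct (sRpow lam xd om a L mu mut) as [_ HAp]; auto; try lra. fold KL Om in HAp.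
      assert (Hpa : Rpower a (2 * mut) <= Rpower K3 (2 * mut) * Rpower eps (2 * mut)).
      { rewrite Rpower_mult_distr by lra. apply Rle_Rpower_l; lra. }
      assert (He1 : eps <= Rpower eps (2 * mut)).
      { rewrite <- (Rpower_1 eps) at 1 by lra. apply Rpower_le_base1; lra. }
      assert (HAp' : SAp lam xd a <= cG * Rpower K3 (2 * mut) * Rpower eps (2 * mut)).
      { eapply Rle_trans; [apply HAp|]. replace (KL * Rpower a (2 * mut) * Om) with (cG * Rpower a (2 * mut)) by (unfold cG; ring).
        rewrite Rmult_assoc. apply Rmult_le_compat_l; auto. }
      assert (HN' : SNo lam e a <= K4 * Rpower eps (2 * mut)).
      { eapply Rle_trans; [apply HN|]. apply Rmult_le_compat_l; lra. }
      unfold A1. lra. }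
  destruct (classic (exists D, 0 < D /\
        forall alpha, 0 < alpha < alpha_max ->
          ssum (fun i => indic (leRb (lam i) alpha) (xd i ^ 2))
          <= D * ssum (fun i => indic (leRb alpha (lam i)) (alpha / lam i * xd i ^ 2)))) as [[D [HD HDc]]|HnD].
  2:{ exists (sqrt A1 + 1), delta0. split. pose proof (sqrt_pos A1); lra. split. auto. split.
      - intros delta e a Hd He HeE HMC Ha Hmin. eapply Rle_trans. apply (P1 delta e a); auto.
        apply Rmult_le_compat_r. left; apply Rpow_pos. lra.
      - intros HD. contradiction. }
  set (B := cG + 16 * (D + 1) * (2 * K1 * X + (2 * K1 + 1) * K4)).
  set (A2 := 2 * B + 2 * K4).
  assert (HB : 0 <= B).
  { unfold B. assert (0 <= K1 * X) by (apply Rmult_le_pos; lra).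
    assert (0 <= (2 * K1 + 1) * K4) by (apply Rmult_le_pos; lra).
    assert (0 <= 16 * (D + 1) * (2 * K1 * X + (2 * K1 + 1) * K4)) by (apply Rmult_le_pos; lra).
    lra. }
  assert (HBc : cG <= B).
  { unfold B. assert (0 <= K1 * X) by (apply Rmult_le_pos; lra).
    assert (0 <= (2 * K1 + 1) * K4) by (apply Rmult_le_pos; lra).
    assert (0 <= 16 * (D + 1) * (2 * K1 * X + (2 * K1 + 1) * K4)) by (apply Rmult_le_pos; lra).
    lra. }
  assert (HA2 : 0 <= A2) by (unfold A2; lra).
  exists (sqrt A1 + sqrt A2 + 1), delta0.
  assert (HsA1 := sqrt_pos A1). assert (HsA2 := sqrt_pos A2).
  split. lra. split. auto. split.
  - intros delta e a Hd He HeE HMC Ha Hmin. eapply Rle_trans. apply (P1 delta e a); auto.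
    apply Rmult_le_compat_r. left; apply Rpow_pos. lra.
  - intros _ delta e a Hd He HeE HMC Ha Hmin.
    destruct (core delta e a Hd He HeE HMC Ha Hmin) as [Heps [HN [Ha3 [HG [HF [Hcase Had]]]]]].
    set (eps := Rpower delta p) in *.
    replace (Rpower delta (2 * mut / (2 * mut + 1))) with (Rpower eps (/ 2)).
    2:{ unfold eps. rewrite Rpower_mult. f_equal. unfold p. field. lra. }
    apply Rle_trans with (sqrt A2 * Rpower eps (/ 2)).
    2:{ apply Rmult_le_compat_r. left; apply Rpow_pos. lra. }
    unfold err, norm_seq. apply sqrt_bound.
    + apply ssum_nonneg. intro; apply pow2_ge_0.
      apply (ssum_lin _ (fun i => (a / (lam i + a)) ^ 2 * xd i ^ 2) (fun i => lam i / (lam i + a) ^ 2 * e i ^ 2) 2 2).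
      intro n. split. apply pow2_ge_0. apply T_err; auto; lra.
      apply (sAp lam xd a); auto; lra. apply (sNo lam e a); auto; lra.
    + auto.
    + left; apply Rpow_pos.
    + rewrite Rpower_sq. replace (2 * / 2) with 1 by field. rewrite Rpower_1 by lra.
      eapply Rle_trans; [apply serr; auto; lra|].
      assert (HApB : SAp lam xd a <= B * eps).
      { destruct (Rle_dec a (Rpower delta q)) as [Hle|Hlt].
        - destruct (sRpow lam xd om a L mu mut) as [_ HAp]; auto; try lra. fold KL Om in HAp.
          eapply Rle_trans; [apply HAp|].
          replace (KL * Rpower a (2 * mut) * Om) with (cG * Rpower a (2 * mut)) by (unfold cG; ring).
          apply Rle_trans with (cG * eps). apply Rmult_le_compat_l; auto.
          apply Rmult_le_compat_r; lra.
        - destruct (sAp lam xd a) as [_ HAp]; auto; try lra.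
          assert (HDa := HDc a Ha). fold (SL lam xd a) (SH lam xd a) in HDa.
          assert (HH := sHGx lam xd e a Hlam Hx He ltac:(lra)).
          assert (HGx := sGx lam xd e a Hlam Hx He ltac:(lra)). destruct HGx as [_ HGx].
          destruct (sGe lam e a) as [_ HGe]; auto; try lra.
          assert (HN0 : 0 <= SNo lam e a). { apply ssum_nonneg. intro n. apply T_No4; auto; lra. apply sNo; auto; lra. }
          assert (HSG : SG lam xd e a <= K1 * eps * (2 * X + 2 * SNo lam e a)).
          { eapply Rle_trans; [apply HG|]. apply Rmult_le_compat_l. nra. auto. }
          assert (HSH : SH lam xd a <= 16 * (2 * K1 * X + (2 * K1 + 1) * K4) * eps).
          { assert (H1 : K1 * eps * (2 * X) = 2 * K1 * X * eps) by ring.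
            assert (H2 : K1 * eps * (2 * SNo lam e a) <= 2 * K1 * (K4 * eps)).
            { replace (K1 * eps * (2 * SNo lam e a)) with (2 * K1 * (eps * SNo lam e a)) by ring.
              apply Rmult_le_compat_l. lra. eapply Rle_trans; [|apply HN].
              rewrite <- (Rmult_1_l (SNo lam e a)) at 2. apply Rmult_le_compat_r; lra. }
            assert (H3 : K1 * eps * (2 * X + 2 * SNo lam e a) = K1 * eps * (2 * X) + K1 * eps * (2 * SNo lam e a)) by ring.
            assert (H4 : 16 * (2 * K1 * X + (2 * K1 + 1) * K4) * eps = 16 * (2 * K1 * X * eps) + 16 * (2 * K1 * (K4 * eps)) + 16 * (K4 * eps)) by ring.
            lra. }
          assert (HSL : 0 <= SH lam xd a). { apply ssum_nonneg. intro n. apply hi_le; auto; lra. apply sH; auto; lra. }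
          apply Rle_trans with ((D + 1) * SH lam xd a). lra.
          apply Rle_trans with ((D + 1) * (16 * (2 * K1 * X + (2 * K1 + 1) * K4) * eps)).
          apply Rmult_le_compat_l; lra.
          assert (0 <= cG * eps) by (apply Rmult_le_pos; lra).
          replace (B * eps) with (cG * eps + (D + 1) * (16 * (2 * K1 * X + (2 * K1 + 1) * K4) * eps)) by (unfold B; ring).
          lra. }
      unfold A2. assert (HN' : SNo lam e a <= K4 * eps) by auto. lra.
Qed.
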